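(* Let $k\ge 2$. Suppose that $1/\epsilon\le\binom{d/2}{k-1}$ and $\delta<1/3$. Then for $n\ge 1/\epsilon$, the space complexity of any valid For-Each-Itemset-Frequency-Indicator sketch satisfies $|\mathcal{S}(n,d,k,\epsilon,\delta)|=\Omega(d/\epsilon)$.
   Context: A database is $\mathcal{D}\in(\{0,1\}^d)^n$ ($n$ rows, $d$ binary columns). An itemset is $T\subseteq[d]$; a $k$-itemset has $|T|=k$. A row contains $T$ if it has a 1 in every column of $T$; $f_T(\mathcal{D})$ is the fraction of rows containing $T$. A For-Each-Itemset-Frequency-Indicator sketch is a pair $(\mathcal{S},\mathcal{Q})$ where $\mathcal{S}$ is a randomized algorithm mapping $(\mathcal{D},k,\epsilon,\delta)$ to a bit string (summary) and $\mathcal{Q}$ is a deterministic procedure mapping a summary and a $k$-itemset $T$ to a bit, such that for every database $\mathcal{D}$ and every single $k$-itemset $T$: if $f_T>\epsilon$ then $\mathcal{Q}(\mathcal{S}(\mathcal{D},k,\epsilon,\delta),T)=1$ with probability at least $1-\delta$, and if $f_T<\epsilon/2$ then it equals 0 with probability at least $1-\delta$. The space complexity $|\mathcal{S}(n,d,k,\epsilon,\delta)|$ is the maximum length in bits of the summary over all $\mathcal{D}\in(\{0,1\}^d)^n$. *)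

(* Defs.v *)
From mathcomp Require Import all_boot all_order all_algebra.
Set Implicit Arguments. Unset Strict Implicit. Unset Printing Implicit Defensive.
Import Order.TTheory GRing.Theory Num.Theory.
Local Open Scope ring_scope.

Definition database (n d : nat) := {ffun 'I_n -> {ffun 'I_d -> bool}}.

Definition row_contains n d (D : database n d) (i : 'I_n) (T : {set 'I_d}) : bool :=
  [forall j in T, D i j].

Definition freq (R : realFieldType) n d (D : database n d) (T : {set 'I_d}) : R :=
  (#|[set i | row_contains D i T]|%:R) / (n%:R).

(* All bit strings of length at most L (each exactly once). *)
Fixpoint strs (L : nat) : seq (seq bool) :=
  if L is L'.+1 then
    [::] :: [seq b :: s | b <- [:: false; true], s <- strs L']
  else [:: [::]].

(* A randomized summary algorithm, at fixed parameters (n,d,k,eps,delta), is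
   described by the output distribution mu D of summaries for every database D.
   [summary_dist L mu]: each mu D is a probability distribution on bit strings,
   and every summary produced with positive probability has length <= L
   (i.e. the space complexity is at most L). *)
Definition summary_dist (R : realFieldType) n d (L : nat)
    (mu : database n d -> seq bool -> R) : Prop :=
  forall D : database n d,
    (forall s, 0 <= mu D s) /\
    (forall s, mu D s != 0 -> (size s <= L)%N) /\
    \sum_(s <- strs L) mu D s = 1.

Definition prob_answer (R : realFieldType) n d (L : nat)
    (mu : database n d -> seq bool -> R) (Q : seq bool -> {set 'I_d} -> bool)
    (D : database n d) (T : {set 'I_d}) (b : bool) : R :=
  \sum_(s <- strs L) mu D s * (Q s T == b)%:R.

Definition valid_FEIFI (R : realFieldType) n d (k : nat) (eps delta : R) (L : nat)
    (mu : database n d -> seq bool -> R) (Q : seq bool -> {set 'I_d} -> bool) : Prop :=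
  summary_dist L mu /\
  forall (D : database n d) (T : {set 'I_d}), #|T| = k ->
    (eps < freq R D T -> 1 - delta <= prob_answer L mu Q D T true) /\
    (freq R D T < eps / 2%:R -> 1 - delta <= prob_answer L mu Q D T false).

(* Main.v *)
Require Import Defs.
From mathcomp Require Import all_boot all_order all_algebra.
From mathcomp Require Import zify ring lra.
Import Order.TTheory GRing.Theory Num.Theory.

Lemma size_strs L : (size (strs L) <= 4 ^ L)%N.
Proof.
elim: L => [|L IH] //=.
rewrite size_cat !size_map size_cat size_map expnS /=. lia.
Qed.

Lemma exp_mono a b e : (a <= b -> a ^ e <= b ^ e)%N.
Proof. move=> h; elim: e => // e IH; rewrite !expnS; exact: leq_mul. Qed.

Lemma final_arith m L S B e : (2^m <= S * B -> B * 2^e <= 3^m -> S <= 4^L -> 2 * m < 3 * e -> m < 30 * L)%N.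
Proof.
move=> h1 h2 h3 h4.
have h5 : (2^m * 2^e <= 4^L * 3^m)%N.
  apply: (leq_trans (leq_mul h1 (leqnn _))).
  rewrite -mulnA; exact: leq_mul.
have h6 : ((2^m * 2^e)^3 <= (4^L * 3^m)^3)%N by apply: exp_mono.
rewrite -expnD -expnM expnMn -!expnM in h6.
have e4 : 4 ^ (L*3) = 2 ^ (6 * L) by rewrite -(expnM 2 2) ; congr (_ ^ _); lia.
rewrite e4 in h6.
have e27 : 3 ^ (m * 3) = 27 ^ m by rewrite mulnC expnM.
rewrite e27 in h6.
set u := m %/ 5. set r := m %% 5.
have hm : m = u * 5 + r by rewrite /u /r -divn_eq.
have h7 : (27 ^ m <= 2 ^ (24 * u + 5 * r))%N.
  have -> : (27 ^ m = (27^5)^u * 27^r)%N by rewrite -expnM -expnD (mulnC 5 u) -hm.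
  have -> : (2 ^ (24 * u + 5 * r) = (2^24)^u * (2^5)^r)%N by rewrite -!expnM -expnD.
  by apply: leq_mul; apply: exp_mono; lia.
have h8 : (2 ^ ((m + e) * 3) <= 2 ^ (6 * L + (24 * u + 5 * r)))%N.
  rewrite expnD; apply: leq_trans h6 _; exact: leq_mul.
rewrite leq_exp2l // in h8.
have : (r < 5)%N by rewrite /r ltn_mod.
lia.
Qed.

Lemma sum_pow (I:finType) (y : {ffun I -> bool}) :
  (\sum_(x : {ffun I -> bool}) 2^#|[pred i | y i == x i]| = 3^#|I|)%N.
Proof.
have -> : (3 ^ #|I| = \prod_(i : I) \sum_(b : bool) (if y i == b then 2 else 1))%N.
  rewrite -prod_nat_const; apply: eq_bigr => i _.
  by rewrite big_bool /=; case: (y i).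
rewrite bigA_distr_bigA /=; apply: eq_bigr => x _.
by rewrite -prod_nat_const big_mkcond /=.
Qed.

Local Open Scope ring_scope.

Lemma card_natr (R : realFieldType) (I : finType) (P : pred I) :
  (#|P|%:R : R) = \sum_i (P i)%:R.
Proof.
rewrite -sum1_card natr_sum big_mkcond /=; apply: eq_bigr => i _.
by rewrite unfold_in; case: (P i).
Qed.

Lemma coding_bound (R : realFieldType) (I : finType) (L : nat) (delta : R)
  (p : {ffun I -> bool} -> seq bool -> R) (dec : seq bool -> I -> bool) :
  (0 < #|I|)%N -> delta < 1 / 3%:R ->
  (forall x s, 0 <= p x s) -> (forall x, \sum_(s <- strs L) p x s = 1) ->
  (forall x i, 1 - delta <= \sum_(s <- strs L) p x s * (dec s i == x i)%:R) ->
  (#|I| < 30 * L)%N.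
Proof.
move=> m0 hd p0 p1 hv.
set m := #|I|.
pose y s : {ffun I -> bool} := [ffun i => dec s i].
pose cnt s (x : {ffun I -> bool}) := #|[pred i | y s i == x i]|.
pose good s x := (2 * m < 3 * cnt s x)%N.
have step1 : forall x, has (fun s => good s x) (strs L).
  move=> x; apply: contraT => /hasPn hn.
  have h1 : \sum_(s <- strs L) p x s * (cnt s x)%:R <= (2 * m)%:R / 3%:R.
    apply: (@le_trans _ _ (\sum_(s <- strs L) p x s * ((2 * m)%:R / 3%:R))); last first.
      by rewrite -mulr_suml p1 mul1r.
    rewrite big_seq_cond [X in _ <= X]big_seq_cond.
    apply: ler_sum => s /andP [hs _]; apply: ler_wpM2l => //.
    have := hn s hs; rewrite /good -leqNgt => hc.
    rewrite ler_pdivlMr ?ltr0n // -natrM ler_nat; lia.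
  have h2 : \sum_(s <- strs L) p x s * (cnt s x)%:R = \sum_i \sum_(s <- strs L) p x s * (dec s i == x i)%:R.
    rewrite exchange_big /=; apply: eq_bigr => s _.
    rewrite /cnt card_natr mulr_sumr; apply: eq_bigr => i _ /=.
    by rewrite /y ffunE.
  have h3 : m%:R * (1 - delta) <= \sum_(s <- strs L) p x s * (cnt s x)%:R.
    rewrite h2; apply: (le_trans _ (ler_sum _ (fun i _ => hv x i))).
    by rewrite sumr_const mulr_natl.
  have hm : 0 < m%:R * (1 / 3%:R - delta) :> R by rewrite mulr_gt0 ?ltr0n // subr_gt0.
  have e2 : (2 * m)%:R = 2%:R * m%:R :> R by rewrite natrM.
  rewrite e2 in h1.
  lra.
set e := ((2 * m) %/ 3).+1.
have he : (2 * m < 3 * e)%N by rewrite /e; lia.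
have hfib : forall s, (#|[pred x | good s x]| <= 3 ^ m %/ 2 ^ e)%N.
  move=> s; rewrite leq_divRL ?expn_gt0 //.
  rewrite -sum_nat_const.
  apply: (@leq_trans (\sum_(x in [pred x | good s x]) 2 ^ cnt s x)).
    apply: leq_sum => x; rewrite inE /good => hg.
    apply: leq_pexp2l => //; rewrite /e; lia.
  rewrite -(@sum_pow I (y s)) [X in (_ <= X)%N](bigID (fun x => good s x)) /=.
  exact: leq_addr.
apply: (@final_arith m L (size (strs L)) (3^m %/ 2^e)%N e) => //; last first.
- exact: size_strs.
- exact: leq_trunc_div.
have -> : (2 ^ m = #|{ffun I -> bool}|)%N by rewrite card_ffun card_bool.
rewrite -sum1_card.
apply: (@leq_trans (\sum_(x : {ffun I -> bool}) \sum_(s <- strs L | good s x) 1)).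
  apply: leq_sum => x _; rewrite sum1_count -has_count; exact: step1.
under eq_bigr do rewrite big_mkcond.
rewrite exchange_big /=.
apply: (@leq_trans (\sum_(s <- strs L) 3 ^ m %/ 2 ^ e)).
  apply: leq_sum => s _; rewrite -big_mkcond sum1_card; exact: hfib.
by rewrite big_const_seq count_predT iter_addn_0 mulnC.
Qed.

Lemma widen_ord_inj m1 m2 (H : (m1 <= m2)%N) : injective (widen_ord H).
Proof. move=> a b /(congr1 val) /= hab; exact: val_inj. Qed.

Theorem theorem3 (R : realFieldType) :
  exists c : R, 0 < c /\
  forall (k d n : nat) (eps delta : R) (L : nat)
         (mu : database n d -> seq bool -> R)
         (Q : seq bool -> {set 'I_d} -> bool),
    (2 <= k)%N ->
    0 < eps < 1 ->
    eps^-1 <= ('C(d./2, k.-1))%:R ->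
    0 <= delta < 1 / 3%:R ->
    eps^-1 <= n%:R ->
    valid_FEIFI k eps delta L mu Q ->
    c * (d%:R / eps) <= L%:R.
Proof.
exists (1 / 360%:R); split; first by rewrite divr_gt0 ?ltr0n.
move=> k d n eps delta L mu Q hk /andP [e0 e1] hC /andP [d0 d1] hn [hsum hval].
set h := d./2. set C := 'C(h, k.-1).
have ie1 : 1 < eps^-1 by rewrite invf_gt1.
have C0 : (0 < C)%N by rewrite -(ltr0n R); apply: lt_le_trans hC; lra.
have hkh : (k.-1 <= h)%N by rewrite -bin_gt0.
have h1 : (1 <= h)%N by move: hk hkh; clear; lia.
have hd : (d <= 3 * h)%N by have := odd_double_half d; rewrite -/h; move: h1; clear; case: (odd d) => /=; lia.
have hd2 : (2 * h <= d)%N by have := odd_double_half d; rewrite -/h; clear; case: (odd d) => /=; lia.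
have n1 : 1 < n%:R :> R by lra.
have n0 : (0 < n)%N by rewrite -(ltr0n R); lra.
pose P j := (j%:R * (2 * eps) <= 1 :> R).
have exP : exists j, P j by exists 0%N; rewrite /P mul0r ler01.
have ubP : forall j, P j -> (j <= C)%N.
  move=> j; rewrite /P => hj; rewrite -(ler_nat R); apply: le_trans hC.
  rewrite -div1r ler_pdivlMr //.
  have : 0 <= j%:R :> R by [].
  nra.
case: (ex_maxnP exP ubP) => g0 Pg0 maxg0.
set g := maxn g0 1.
have g1 : (1 <= g)%N by rewrite leq_maxr.
have gC : (g <= C)%N by rewrite geq_max ubP.
have G2 : 1 <= 4%:R * eps * g%:R.
  have : ~~ P g0.+1 by apply/negP => /maxg0; clear; lia.
  rewrite /P -ltNge => hlt.
  have : (g0.+1 <= 2 * g)%N by rewrite /g; clear; lia.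
  rewrite -(ler_nat R) natrM => hle.
  nra.
set q := (n %/ g)%N.
have hgq : (g * q <= n)%N by rewrite mulnC leq_trunc_div.
have hq : eps * n%:R < q%:R.
  case: (posnP g0) => [g00 | g0pos].
    have -> : q = n by rewrite /q /g g00 divn1.
    nra.
  have gg : g = g0 by rewrite /g; move: g0pos; clear; lia.
  have Pg : g%:R * (2 * eps) <= 1 :> R by rewrite gg.
  have h2g : (2 * g <= n)%N.
    rewrite -(ler_nat R); apply: le_trans hn.
    rewrite -div1r ler_pdivlMr // natrM; nra.
  have hlt : (n < 2 * g * q)%N.
    have := ltn_ceil n g1; rewrite -/q mulSn -mulnA (mulnC g q).
    move: (q * g)%N h2g => x; clear; lia.
  have : n%:R < (2 * g * q)%N%:R :> R by rewrite ltr_nat.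
  rewrite !natrM => hlt'.
  have : 0 <= n%:R :> R by [].
  have : 0 <= q%:R :> R by [].
  nra.
set Ks := [set A : {set 'I_h} | #|A| == k.-1].
have cKs : #|Ks| = C by rewrite card_draws card_ord.
have hgK : (g <= #|Ks|)%N by rewrite cKs.
have hhd : (h <= d)%N by move: hd2; clear; lia.
pose E (i : 'I_g) : {set 'I_h} := enum_val (widen_ord hgK i).
pose S (i : 'I_g) : {set 'I_d} := [set widen_ord hhd a | a in E i].
have ES : forall i, #|E i| = k.-1.
  by move=> i; have := enum_valP (widen_ord hgK i); rewrite inE => /eqP.
have S1 : forall i (c : 'I_d), c \in S i -> (c < h)%N.
  by move=> i c /imsetP [a _ ->]; exact: (ltn_ord a).
have S2 : forall i, #|S i| = k.-1.
  by move=> i; rewrite card_imset ?ES //; exact: widen_ord_inj.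
have S3 : forall i j, S i \subset S j -> i = j.
  move=> i j /subsetP hs.
  have hsub : E i \subset E j.
    apply/subsetP => a ha.
    have : widen_ord hhd a \in S j by apply: hs; apply: imset_f.
    by case/imsetP => a' ha' /widen_ord_inj ->.
  have : E i = E j.
    apply/eqP; rewrite eqEcard hsub /=.
    by move: (ES i) (ES j) => -> ->.
  move=> /enum_val_inj hE; exact: (@widen_ord_inj _ _ hgK _ _ hE).
have hB : forall b : 'I_h, (h + b < d)%N.
  by move=> b; have := ltn_ord b; move: hd2; clear; lia.
pose colB (b : 'I_h) : 'I_d := Ordinal (hB b).
have colB_nS : forall i b, colB b \notin S i.
  by move=> i b; apply/negP => /S1; rewrite /colB /=; clear; lia.
have colB_inj : injective colB.
  move=> b b' /(congr1 val); rewrite /colB /= => hbb; apply: val_inj; exact: (addnI hbb).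
pose I := ('I_g * 'I_h)%type.
pose D (x : {ffun I -> bool}) : database n d :=
  [ffun r : 'I_n => [ffun c : 'I_d => [exists i : 'I_g, ((r %/ q)%N == i) &&
     ((c \in S i) || [exists b : 'I_h, (c == colB b) && x (i, b)])]]].
pose T (ib : I) : {set 'I_d} := colB ib.2 |: S ib.1.
have cardT : forall ib, #|T ib| = k.
  move=> ib; rewrite cardsU1 colB_nS /=; move: (S2 ib.1) => ->; move: hk; clear; lia.
have key : forall x r i b,
    row_contains (D x) r (T (i, b)) = ((r %/ q)%N == i) && x (i, b).
  move=> x r i b; rewrite /row_contains.
  apply/forall_inP/andP.
  - move=> H.
    have hb := H (colB b).
    rewrite /T in_setU1 eqxx /= !ffunE in hb.
    have {hb} := hb isT.
    case/existsP => j /andP [/eqP hj /orP [hin | /existsP [b' /andP [/eqP /colB_inj hbb hx]]]].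
      by rewrite (negbTE (colB_nS _ _)) in hin.
    have ji : i = j.
      apply: S3; apply/subsetP => c hc.
      have := H c; rewrite /T in_setU1 hc orbT /= !ffunE => /(_ isT).
      case/existsP => j' /andP [/eqP hj' /orP [hin' | /existsP [b'' /andP [/eqP hcb _]]]].
        have -> : j = j' by apply: val_inj; rewrite /= -hj -hj'.
        exact: hin'.
      have := S1 _ _ hc; rewrite hcb /colB /=; clear; lia.
    by rewrite -ji in hx hj; rewrite hbb hx hj eqxx.
  - case=> /eqP hr hx c; rewrite /T in_setU1 => /orP [/eqP -> | hc]; rewrite !ffunE;
      apply/existsP; exists i; rewrite hr eqxx /=.
      by apply/orP; right; apply/existsP; exists b; rewrite eqxx hx.
    by rewrite hc.
have q0 : (0 < q)%N.
  rewrite -(ltr0n R); apply: le_lt_trans hq; rewrite mulr_ge0 //; lra.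
have hcnt : forall i : 'I_g, (q <= #|[set r : 'I_n | (r %/ q)%N == i]|)%N.
  move=> i.
  have Hf : forall t : 'I_q, (i * q + t < n)%N.
    move=> t; have := ltn_ord t; have := ltn_ord i; move: hgq; clear; nia.
  pose f (t : 'I_q) : 'I_n := Ordinal (Hf t).
  have finj : injective f.
    move=> t t' /(congr1 val); rewrite /f /= => /addnI ht; exact: val_inj.
  have cq : #|[set f t | t : 'I_q]| = q by rewrite card_imset ?card_ord.
  rewrite -[X in (X <= _)%N]cq.
  apply: subset_leq_card; apply/subsetP => r /imsetP [t _ ->].
  by rewrite inE /f /= divnMDl // divn_small // addn0.
have gh : (#|{: 'I_g * 'I_h}| < 30 * L)%N.
  apply: (@coding_bound R ('I_g * 'I_h)%type L delta (fun x s => mu (D x) s) (fun s ib => Q s (T ib))).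
  - by rewrite card_prod !card_ord muln_gt0 g1 h1.
  - exact: d1.
  - move=> x s; exact: (hsum (D x)).1.
  - move=> x; exact: (hsum (D x)).2.2.
  move=> x [i b].
  have [hT hF] := hval (D x) (T (i,b)) (cardT _).
  have hf : freq R (D x) (T (i,b)) =
      (if x (i,b) then #|[set r : 'I_n | (r %/ q)%N == i]|%:R / n%:R else 0).
    rewrite /freq; under eq_finset => r do rewrite key.
    case: (x (i,b)).
      by under eq_finset => r do rewrite andbT.
    by under eq_finset => r do rewrite andbF; rewrite cards0 mul0r.
  case hx: (x (i,b)).
    apply: hT; rewrite hf hx ltr_pdivlMr ?ltr0n //.
    apply: lt_le_trans hq _; rewrite ler_nat; exact: hcnt.
  apply: hF; rewrite hf hx; lra.
rewrite card_prod !card_ord in gh.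
have hnat : (12 * (g * h) <= 360 * L)%N by move: gh; clear; lia.
have einv : eps^-1 <= 4%:R * g%:R.
  rewrite -div1r ler_pdivrMr //; nra.
have hdR : d%:R <= (3 * h)%N%:R :> R by rewrite ler_nat.
have h2 : d%:R / eps <= (3 * h)%N%:R * (4%:R * g%:R).
  by apply: ler_pM => //; rewrite invr_ge0; lra.
have h3 : (3 * h)%N%:R * (4%:R * g%:R) <= (360 * L)%N%:R :> R.
  have -> : (3 * h)%N%:R * (4%:R * g%:R) = (12 * (g * h))%N%:R :> R.
    by rewrite !natrM; ring.
  by rewrite ler_nat.
rewrite natrM in h3.
lra.
Qed.
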